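(* Let $\alpha=(x,u')$ and $\beta=(y,v')$ be points of $\mathcal{S}$ with $x\neq y$, $u'\neq v'$, and either ($u'\in y'^{\perp}$ and $v'\notin x'^{\perp}$) or ($u'\notin y'^{\perp}$ and $v'\in x'^{\perp}$) (perps in $S'$). Then $d(\alpha,\beta)=3$, where $d$ is the distance in the collinearity graph of $\mathcal{S}$.
   Context: Let $S=(P,L)$ and $S'=(P',L')$ be generalized quadrangles of order $(2,2)$ (every line has 3 points, every point lies on 3 lines, and for each point $x$ and line $l\not\ni x$ exactly one point of $l$ is collinear with $x$), with an isomorphism $x\mapsto x'$ from $S$ to $S'$. In a point-line geometry, $x^{\perp}$ is $x$ together with all points collinear with $x$, and $A^{\perp}=\bigcap_{a\in A}a^{\perp}$. A triad is a set of three pairwise non-collinear points, complete if $|T^{\perp}|=3$. The geometry $\mathcal{S}=(\mathcal{P},\mathcal{L})$ has point set $\mathcal{P}=\{(x,y')\in P\times P':y'\in x'^{\perp}\}$ and lines all $3$-subsets $\{(x,u'),(y,v'),(z,w')\}$ of $\mathcal{P}$ where $T=\{x,y,z\}$ (three distinct points) is a line or a complete triad of $S$ and $\{u',v',w'\}=T'^{\perp}$ in $S'$ with $u',v',w'$ distinct. *)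

(* Defs.v *)
From mathcomp Require Import all_boot.
Set Implicit Arguments. Unset Strict Implicit. Unset Printing Implicit Defensive.

Section GQ.
Variable P : finType.
Variable L : {set {set P}}.

Definition collinear (x y : P) : bool := [exists l in L, (x \in l) && (y \in l)].

Definition perp (x : P) : {set P} := [set y | (y == x) || collinear x y].

Definition perpS (A : {set P}) : {set P} := \bigcap_(a in A) perp a.

Definition is_GQ22 : Prop :=
  [/\ forall l, l \in L -> #|l| = 3,
      forall x : P, #|[set l in L | x \in l]| = 3
    & forall (x : P) l, l \in L -> x \notin l ->
        #|[set y in l | collinear x y]| = 1].

Definition triad (T : {set P}) : Prop :=
  #|T| = 3 /\ forall x y, x \in T -> y \in T -> x != y -> ~~ collinear x y.

Definition complete_triad (T : {set P}) : Prop := triad T /\ #|perpS T| = 3.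
End GQ.

Definition isom (P P' : finType) (L : {set {set P}}) (L' : {set {set P'}})
  (f : P -> P') : Prop :=
  bijective f /\ forall l : {set P}, (f @: l \in L') = (l \in L).

Section Construction.
Variables (P P' : finType) (L : {set {set P}}) (L' : {set {set P'}}) (f : P -> P').

Definition ptS (a : P * P') : bool := a.2 \in perp L' (f a.1).

Definition lineS (Lam : {set P * P'}) : Prop :=
  exists (x y z : P) (u v w : P'),
    [/\ Lam = [set (x, u); (y, v); (z, w)],
        [/\ ptS (x, u), ptS (y, v) & ptS (z, w)] /\
        [/\ x != y, y != z & x != z],
        [set x; y; z] \in L \/ complete_triad L [set x; y; z],
        [/\ u != v, v != w & u != w]
      & [set u; v; w] = perpS L' (f @: [set x; y; z])].

Definition adjS (a b : P * P') : Prop :=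
  a != b /\ exists Lam, lineS Lam /\ a \in Lam /\ b \in Lam.

Definition walkS (a b : P * P') (n : nat) : Prop :=
  exists g : nat -> P * P',
    [/\ g 0 = a, g n = b & forall i, i < n -> adjS (g i) (g i.+1)].

Definition distS (a b : P * P') (n : nat) : Prop :=
  walkS a b n /\ forall m, m < n -> ~ walkS a b m.
End Construction.

(* Main.v *)
Require Import Defs.
From mathcomp Require Import all_boot zify.
Set Implicit Arguments. Unset Strict Implicit. Unset Printing Implicit Defensive.

Lemma in3P (T:finType) (a b c z : T) : z \in [set a; b; c] -> [\/ z = a, z = b | z = c].
Proof. rewrite !inE => H. case/orP: H => [H|/eqP->]; last by apply: Or33. case/orP: H => /eqP ->; [exact: Or31|exact: Or32]. Qed.
Lemma in3 (T:finType) (a b c z : T) : [\/ z = a, z = b | z = c] -> z \in [set a; b; c].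
Proof. by case => ->; rewrite !inE eqxx ?orbT. Qed.
Lemma in3a (T:finType) (a b c : T) : a \in [set a; b; c]. Proof. by apply: in3; apply: Or31. Qed.
Lemma in3b (T:finType) (a b c : T) : b \in [set a; b; c]. Proof. by apply: in3; apply: Or32. Qed.
Lemma in3c (T:finType) (a b c : T) : c \in [set a; b; c]. Proof. by apply: in3; apply: Or33. Qed.

Lemma card3_other (T : finType) (A : {set T}) a b :
  #|A| = 3 -> exists2 c, c \in A & (c != a) && (c != b).
Proof.
move=> hA.
have : 0 < #|A :\: [set a; b]|.
  rewrite cardsD hA.
  have h1 : #|A :&: [set a; b]| <= #|[set a; b]| by apply: subset_leq_card; apply: subsetIr.
  have h2 : #|[set a; b]| <= 2 by rewrite cards2; case: (a != b).
  lia.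
case/card_gt0P => c; rewrite !inE => /andP [hc hcA].
exists c => //; move: hc; by case: (c == a); case: (c == b).
Qed.

Lemma cards3d (T : finType) (a b c : T) : a != b -> a != c -> b != c -> #|[set a; b; c]| = 3.
Proof.
move=> hab hac hbc.
have -> : [set a; b; c] = a |: [set b; c] by apply/setP => z; rewrite !inE orbA.
by rewrite cardsU1 cards2 hbc !inE negb_or hab hac.
Qed.

Lemma card3_eq (T : finType) (A : {set T}) a b c :
  #|A| = 3 -> a \in A -> b \in A -> c \in A -> a != b -> a != c -> b != c ->
  A = [set a; b; c].
Proof.
move=> hA ha hb hc hab hac hbc.
apply/esym/eqP; rewrite eqEcard; apply/andP; split.
  by apply/subsetP => z /in3P [] ->.
by rewrite hA cards3d.
Qed.

Lemma card3_no4 (T : finType) (A : {set T}) a b c d :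
  #|A| = 3 -> a \in A -> b \in A -> c \in A -> d \in A -> a != b -> a != c -> b != c ->
  d != a -> d != b -> d != c -> False.
Proof.
move=> hA ha hb hc hd hab hac hbc hda hdb hdc.
move: hd; rewrite (card3_eq hA ha hb hc hab hac hbc) => /in3P [] /eqP.
by rewrite (negbTE hda). by rewrite (negbTE hdb). by rewrite (negbTE hdc).
Qed.
Section G.
Variables (P : finType) (L : {set {set P}}).
Hypothesis HG : is_GQ22 L.
Local Notation col := (collinear L).

Lemma colI l x y : l \in L -> x \in l -> y \in l -> col x y.
Proof. by move=> hl hx hy; apply/existsP; exists l; rewrite hl hx hy. Qed.

Lemma colE x y : col x y -> exists l, [/\ l \in L, x \in l & y \in l].
Proof. by case/existsP => l /andP [hl /andP [hx hy]]; exists l. Qed.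

Lemma col_sym x y : col x y = col y x.
Proof.
by apply/idP/idP => /colE [l [hl h1 h2]]; apply: (colI hl).
Qed.

Lemma LP3 p : #|[set l in L | p \in l]| = 3.
Proof. by case: HG. Qed.

Lemma col_refl x : col x x.
Proof.
have : 0 < #|[set l in L | x \in l]| by rewrite LP3.
case/card_gt0P => l; rewrite inE => /andP [hl hx].
exact: (colI hl).
Qed.

Lemma perpE x y : (y \in perp L x) = col x y.
Proof. rewrite inE; case: eqP => // ->; by rewrite col_refl. Qed.

Lemma perpS_col A a y : y \in perpS L A -> a \in A -> col a y.
Proof. by move=> /bigcapP H ha; rewrite -perpE; apply: H. Qed.

Lemma perpS3 a b c y : (y \in perpS L [set a; b; c]) = [&& col a y, col b y & col c y].
Proof.
apply/idP/idP.
  move=> H; rewrite (perpS_col H (in3a _ _ _)) (perpS_col H (in3b _ _ _)).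
  by rewrite (perpS_col H (in3c _ _ _)).
case/and3P => h1 h2 h3; apply/bigcapP => z /in3P [] ->; by rewrite perpE.
Qed.

Lemma gqU l p a b : l \in L -> p \notin l -> a \in l -> b \in l -> col p a -> col p b -> a = b.
Proof.
move=> hl hp ha hb hpa hpb.
case: HG => _ _ /(_ p l hl hp) /eqP /cards1P [z hz].
have : a \in [set y in l | col p y] by rewrite inE ha hpa.
have : b \in [set y in l | col p y] by rewrite inE hb hpb.
by rewrite hz !inE => /eqP -> /eqP ->.
Qed.

Lemma gqE l p : l \in L -> p \notin l -> exists2 y, y \in l & col p y.
Proof.
move=> hl hp.
case: HG => _ _ /(_ p l hl hp) H.
have : 0 < #|[set y in l | col p y]| by rewrite H.
by case/card_gt0P => y; rewrite inE => /andP [h1 h2]; exists y.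
Qed.

Lemma online l p u a : l \in L -> p \in l -> u \in l -> p != u -> col a p -> col a u -> a \in l.
Proof.
move=> hl hp hu hpu hap hau; apply/negPn/negP => ha.
by move/eqP: hpu; apply; apply: (gqU hl ha).
Qed.

Lemma lineU l1 l2 a b : l1 \in L -> l2 \in L -> a != b -> a \in l1 -> b \in l1 ->
  a \in l2 -> b \in l2 -> l1 = l2.
Proof.
move=> h1 h2 hab ha1 hb1 ha2 hb2.
apply/eqP; rewrite eqEcard.
case: HG => HL _ _; rewrite (HL _ h1) (HL _ h2) leqnn andbT.
apply/subsetP => c hc; apply/negPn/negP => hc2.
by move/eqP: hab; apply; apply: (gqU h2 hc2 ha2 hb2); apply: (colI h1).
Qed.

Lemma third l a b : l \in L -> a \in l -> b \in l -> a != b ->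
  exists c, [/\ c \in l, c != a, c != b & l = [set a; b; c]].
Proof.
move=> hl ha hb hab.
case: HG => HL _ _.
case: (card3_other a b (HL _ hl)) => c hc /andP [hca hcb].
exists c; split => //.
by apply: card3_eq => //; rewrite ?(HL _ hl) // eq_sym.
Qed.

Lemma neq_of_col a b c : col a c -> ~~ col b c -> a != b.
Proof. by move=> h1 h2; apply/eqP => e; move: h2; rewrite -e h1. Qed.

Lemma nc u w a b : ~~ col u w -> col a u -> col a w -> col b u -> col b w -> a != b -> ~~ col a b.
Proof.
move=> huw hau haw hbu hbw hab; apply/negP => /colE [l [hl ha hb]].
have hu : u \in l by apply: (online hl ha hb hab); rewrite col_sym.
have hw : w \in l by apply: (online hl ha hb hab); rewrite col_sym.
by move: huw; rewrite (colI hl hu hw).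
Qed.

Lemma inLP l p : l \in L -> p \in l -> l \in [set l in L | p \in l].
Proof. by move=> h1 h2; rewrite inE h1 h2. Qed.

Lemma reg u w a b c p : ~~ col u w -> col a u -> col a w -> col b u -> col b w ->
  col c u -> col c w -> a != b -> a != c -> b != c -> col p a -> col p b ->
  p != u -> p != w -> col p c.
Proof.
move=> huw hau haw hbu hbw hcu hcw hab hac hbc hpa hpb hpu hpw.
case: (boolP (col p c)) => // hpc; exfalso.
have nab := nc huw hau haw hbu hbw hab.
have nac := nc huw hau haw hcu hcw hac.
have nbc := nc huw hbu hbw hcu hcw hbc.
have hcu' : c != u by apply: (neq_of_col hcw huw).
have hcw' : c != w by apply: (neq_of_col hcu); rewrite col_sym.
case: (colE hcu) => l1 [hl1 hc1 hu1].
case: (colE hcw) => l2 [hl2 hc2 hw2].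
case: (third hl1 hc1 hu1 hcu') => u2 [hu21 hu2c hu2u el1].
case: (third hl2 hc2 hw2 hcw') => w2 [hw22 hw2c hw2w el2].
have npu : forall z, z \in [:: u; w] -> ~~ col p z.
  move=> z hz; apply/negP => hpz.
  have hpz' : p != z by move: hz; rewrite !inE => /orP [] /eqP ->.
  case: (colE hpz) => l [hl hpl hzl].
  have hal : a \in l.
    apply: (online hl hpl hzl hpz'); first by rewrite col_sym.
    by move: hz; rewrite !inE => /orP [] /eqP ->.
  have hbl : b \in l.
    apply: (online hl hpl hzl hpz'); first by rewrite col_sym.
    by move: hz; rewrite !inE => /orP [] /eqP ->.
  by move: nab; rewrite (colI hl hal hbl).
have hpl1 : p \notin l1 by apply/negP => h; move: hpc; rewrite (colI hl1 h hc1).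
have hpl2 : p \notin l2 by apply/negP => h; move: hpc; rewrite (colI hl2 h hc2).
have hpu2 : col p u2.
  case: (gqE hl1 hpl1) => y; rewrite {1}el1 => /in3P [] -> //.
    by rewrite (negbTE hpc).
  by rewrite (negbTE (npu u _)) // !inE eqxx.
have hpw2 : col p w2.
  case: (gqE hl2 hpl2) => y; rewrite {1}el2 => /in3P [] -> //.
    by rewrite (negbTE hpc).
  by rewrite (negbTE (npu w _)) // !inE eqxx orbT.
have hxl1 : forall x, col x c = false -> x \notin l1.
  by move=> x hx; apply/negP => h; move: hx; rewrite (colI hl1 h hc1).
have hxl2 : forall x, col x c = false -> x \notin l2.
  by move=> x hx; apply/negP => h; move: hx; rewrite (colI hl2 h hc2).
have nxu2 : forall x, col x c = false -> col x u -> ~~ col x u2.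
  move=> x hx hxu; apply/negP => hxu2.
  by move/eqP: hu2u; apply; apply/esym; apply: (gqU hl1 (hxl1 x hx)).
have nxw2 : forall x, col x c = false -> col x w -> ~~ col x w2.
  move=> x hx hxw; apply/negP => hxw2.
  by move/eqP: hw2w; apply; apply/esym; apply: (gqU hl2 (hxl2 x hx)).
have nau2 := nxu2 a (negbTE nac) hau.
have nbu2 := nxu2 b (negbTE nbc) hbu.
have naw2 := nxw2 a (negbTE nac) haw.
have nbw2 := nxw2 b (negbTE nbc) hbw.
case: (colE hpa) => la [hla hpla hala].
case: (colE hpb) => lb [hlb hplb hblb].
case: (colE hpu2) => lu [hlu hplu hulu].
case: (colE hpw2) => lw [hlw hplw hwlw].
have dif : forall (l l' : {set P}) x y, l' \in L -> x \in l -> y \in l' -> ~~ col x y -> l' != l.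
  move=> l l' x y hl' hx hy hxy; apply/eqP => e; move: hxy; rewrite -e in hx.
  by rewrite (colI hl' hx hy).
have elw : lu = lw.
  apply/eqP; apply/negPn/negP => hne.
  apply: (card3_no4 (LP3 p) (inLP hla hpla) (inLP hlb hplb) (inLP hlu hplu) (inLP hlw hplw)).
  - by rewrite eq_sym; apply: (dif _ _ _ _ hlb hala hblb nab).
  - by rewrite eq_sym; apply: (dif _ _ _ _ hlu hala hulu nau2).
  - by rewrite eq_sym; apply: (dif _ _ _ _ hlu hblb hulu nbu2).
  - exact: (dif _ _ _ _ hlw hala hwlw naw2).
  - exact: (dif _ _ _ _ hlw hblb hwlw nbw2).
  - by rewrite eq_sym.
have hu2w2 : col w2 u2 by rewrite elw in hulu; apply: (colI hlw hwlw hulu).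
have hw21 : w2 \in l1.
  apply: (online hl1 hc1 hu21 _ _ hu2w2); first by rewrite eq_sym.
  by rewrite col_sym; apply: (colI hl2 hc2 hw22).
have e12 : l1 = l2 by apply: (lineU hl1 hl2 _ hc1 hw21 hc2 hw22); rewrite eq_sym.
by move: huw; rewrite e12 in hu1; rewrite (colI hl2 hu1 hw2).
Qed.

Lemma no2 a b c u w v : a != b -> b != c -> a != c ->
  col a u -> col b u -> col c u -> col a w -> col b w -> col c w -> u != w ->
  col b v -> col c v -> ~~ col a v -> False.
Proof.
move=> hab hbc hac hau hbu hcu haw hbw hcw huw hbv hcv hav.
case: (boolP (col u w)) => [cuw | ncuw].
  case: (colE cuw) => l [hl hu hw].
  have hal : a \in l by apply: (online hl hu hw huw).
  have hbl : b \in l by apply: (online hl hu hw huw).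
  have hcl : c \in l by apply: (online hl hu hw huw).
  case: (boolP (v \in l)) => hvl.
    by move: hav; rewrite (colI hl hal hvl).
  by move/eqP: hbc; apply; apply: (gqU hl hvl); rewrite // col_sym.
have hvu : v != u by apply/eqP => e; move: hav; rewrite e hau.
have hvw : v != w by apply/eqP => e; move: hav; rewrite e haw.
have := reg ncuw hbu hbw hcu hcw hau haw hbc _ _ _ _ hvu hvw.
rewrite eq_sym hab eq_sym hac !(col_sym v) hbv hcv.
by move/(_ isT isT isT isT) => h; move: hav; rewrite h.
Qed.

Lemma ex_other A B p q : ~~ col A B -> col A p -> col B p -> col A q -> col B q ->
  exists r, [/\ col A r, col B r, r != p & r != q].
Proof.
move=> nAB hAp hBp hAq hBq.
case: (colE hAp) => lp [hlp hAlp hplp].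
case: (colE hAq) => lq [hlq hAlq hqlq].
case: (card3_other lp lq (LP3 A)) => l3; rewrite inE => /andP [hl3 hA3] /andP [h3p h3q].
have hB3 : B \notin l3 by apply/negP => h; move: nAB; rewrite (colI hl3 hA3 h).
case: (gqE hl3 hB3) => r hr3 hBr.
exists r; split => //; first exact: (colI hl3 hA3 hr3).
  apply/eqP => e; rewrite e in hr3.
  have hAp' : A != p by rewrite eq_sym; apply: (neq_of_col (c:=B)); rewrite // col_sym.
  by move: h3p; rewrite (lineU hl3 hlp hAp' hA3 hr3 hAlp hplp) eqxx.
apply/eqP => e; rewrite e in hr3.
have hAq' : A != q by rewrite eq_sym; apply: (neq_of_col (c:=B)); rewrite // col_sym.
by move: h3q; rewrite (lineU hl3 hlq hAq' hA3 hr3 hAlq hqlq) eqxx.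
Qed.

Lemma common3 A B p q r y : ~~ col A B -> col A p -> col B p -> col A q -> col B q ->
  col A r -> col B r -> p != q -> p != r -> q != r -> col A y -> col B y ->
  y \in [set p; q; r].
Proof.
move=> nAB hAp hBp hAq hBq hAr hBr hpq hpr hqr hAy hBy.
have hpA : col p A by rewrite col_sym.
have hpB : col p B by rewrite col_sym.
have hqA : col q A by rewrite col_sym.
have hqB : col q B by rewrite col_sym.
have hrA : col r A by rewrite col_sym.
have hrB : col r B by rewrite col_sym.
have npq := nc nAB hpA hpB hqA hqB hpq.
have npr := nc nAB hpA hpB hrA hrB hpr.
have nqr := nc nAB hqA hqB hrA hrB hqr.
case: (colE hAp) => lp [hlp hAlp hplp].
case: (colE hAq) => lq [hlq hAlq hqlq].
case: (colE hAr) => lr [hlr hAlr hrlr].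
case: (colE hAy) => ly [hly hAly hyly].
have dif : forall (l l' : {set P}) x z, l' \in L -> x \in l -> z \in l' -> ~~ col x z -> l != l'.
  move=> l l' x z hl' hx hz hxz; apply/eqP => e; move: hxz; rewrite e in hx.
  by rewrite (colI hl' hx hz).
have := inLP hly hAly.
rewrite (card3_eq (LP3 A) (inLP hlp hAlp) (inLP hlq hAlq) (inLP hlr hAlr)
  (dif _ _ _ _ hlq hplp hqlq npq) (dif _ _ _ _ hlr hplp hrlr npr) (dif _ _ _ _ hlr hqlq hrlr nqr)).
have hBn : forall l : {set P}, l \in L -> A \in l -> B \notin l.
  by move=> l hl hA; apply/negP => hB; move: nAB; rewrite (colI hl hA hB).
case/in3P => e; rewrite e in hyly; apply: in3.
- by apply: Or31; apply: (gqU hlp (hBn _ hlp hAlp)).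
- by apply: Or32; apply: (gqU hlq (hBn _ hlq hAlq)).
- by apply: Or33; apply: (gqU hlr (hBn _ hlr hAlr)).
Qed.

Lemma triple A B p q : ~~ col A B -> col A p -> col B p -> col A q -> col B q -> p != q ->
  exists C r, [/\ ~~ col A C, ~~ col B C, A != C, B != C &
    [/\ r != p, r != q & perpS L [set A; B; C] = [set p; q; r]]].
Proof.
move=> nAB hAp hBp hAq hBq hpq.
have hpA : col p A by rewrite col_sym.
have hpB : col p B by rewrite col_sym.
have hqA : col q A by rewrite col_sym.
have hqB : col q B by rewrite col_sym.
have npq := nc nAB hpA hpB hqA hqB hpq.
have hAB : A != B by apply/eqP => e; move: nAB; rewrite e col_refl.
case: (ex_other nAB hAp hBp hAq hBq) => r [hAr hBr hrp hrq].
case: (ex_other npq hpA hqA hpB hqB) => C [hpC hqC hCA hCB].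
have hCp : col C p by rewrite col_sym.
have hCq : col C q by rewrite col_sym.
have hrC : col r C.
  apply: (reg npq hAp hAq hBp hBq hCp hCq hAB _ _ _ _ hrp hrq);
    rewrite 1?eq_sym // col_sym //.
exists C, r; split.
- by apply: (nc npq hAp hAq hCp hCq); rewrite eq_sym.
- by apply: (nc npq hBp hBq hCp hCq); rewrite eq_sym.
- by rewrite eq_sym.
- by rewrite eq_sym.
split => //.
apply/setP => y; rewrite perpS3; apply/idP/idP.
  case/and3P => hAy hBy _.
  by apply: (common3 nAB hAp hBp hAq hBq hAr hBr hpq _ _ hAy hBy); rewrite eq_sym.
by case/in3P => ->; rewrite ?hAp ?hBp ?hAq ?hBq ?hAr ?hBr ?hCp ?hCq // col_sym.
Qed.

Lemma perpS_line l : l \in L -> perpS L l = l.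
Proof.
move=> hl; apply/setP => y; apply/idP/idP => [H|hy].
  case: HG => HL _ _.
  have : 0 < #|l| by rewrite HL.
  case/card_gt0P => a ha.
  case: (card3_other a a (HL _ hl)) => b hb /andP [hba _].
  apply/negPn/negP => hyl.
  move/eqP: hba; apply; apply: (gqU hl hyl hb ha); rewrite col_sym; exact: perpS_col H _.
by apply/bigcapP => z hz; rewrite perpE; apply: (colI hl hz hy).
Qed.
End G.

Lemma walk_rev (P P' : finType) (L : {set {set P}}) (L' : {set {set P'}}) (f : P -> P') a b n :
  walkS L L' f a b n -> walkS L L' f b a n.
Proof.
case=> g [h0 hn H].
exists (fun i => g (n - i)); split; rewrite ?subn0 ?subnn //.
move=> i hi.
have e : n - i = (n - i.+1).+1 by lia.
rewrite e.
have := H (n - i.+1) ltac:(lia).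
case=> hne [Lam [hL [h1 h2]]]; split; first by rewrite eq_sym.
by exists Lam.
Qed.

Lemma dist_rev (P P' : finType) (L : {set {set P}}) (L' : {set {set P'}}) (f : P -> P') a b n :
  distS L L' f a b n -> distS L L' f b a n.
Proof.
case=> hw hm; split; first exact: walk_rev.
by move=> m lt hw'; apply: (hm m lt); apply: walk_rev.
Qed.

Section C.
Variables (P P' : finType) (L : {set {set P}}) (L' : {set {set P'}}) (f : P -> P') (g : P' -> P).
Hypotheses (HG : is_GQ22 L) (HG' : is_GQ22 L') (fK : cancel f g) (gK : cancel g f)
  (Hl : forall l : {set P}, (f @: l \in L') = (l \in L)).
Local Notation col := (collinear L).
Local Notation col' := (collinear L').

Lemma imset3 a b c : f @: [set a; b; c] = [set f a; f b; f c].
Proof.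
apply/setP => z; apply/imsetP/idP.
  case=> y /in3P [] -> ->.
  exact: in3a. exact: in3b. exact: in3c.
case/in3P => ->.
 exists a => //; exact: in3a.
 exists b => //; exact: in3b.
 exists c => //; exact: in3c.
Qed.

Lemma col_f a b : col' (f a) (f b) = col a b.
Proof.
apply/idP/idP.
  case/colE => l' [hl' ha hb].
  have e : f @: (g @: l') = l'.
    apply/setP => z; apply/imsetP/idP.
      by case=> y /imsetP [z' hz' ->] ->; rewrite gK.
    by move=> hz; exists (g z); [apply: imset_f | rewrite gK].
  have hl : g @: l' \in L by rewrite -Hl e.
  apply: (colI hl).
    by rewrite -(fK a); apply: imset_f.
  by rewrite -(fK b); apply: imset_f.
case/colE => l [hl ha hb].
by apply: (colI (l := f @: l)); rewrite ?Hl //; apply: imset_f.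
Qed.

Lemma finj : injective f. Proof. exact: can_inj fK. Qed.

Lemma perpS_f T : f @: perpS L T = perpS L' (f @: T).
Proof.
apply/setP => y; rewrite -(gK y) (mem_imset _ _ finj); apply/idP/idP => H.
  rewrite /perpS; apply/bigcapP => z /imsetP [a ha ->]; rewrite (perpE HG') col_f.
  exact: (@perpS_col _ _ HG T a (g y) H ha).
rewrite /perpS; apply/bigcapP => a ha; rewrite (perpE HG) -col_f.
by apply: (@perpS_col _ _ HG' (f @: T) (f a) (f (g y)) H); apply: imset_f.
Qed.

Lemma adj_nec a p b q : adjS L L' f (a, p) (b, q) ->
  [/\ (a != b) && (p != q), col' (f a) q, col' (f b) p, col' (f a) p & col' (f b) q].
Proof.
case=> hne [Lam [[x [y [z [u [v [w [eL [pts dis] _ [huv hvw huw] ep]]]]]]] [ha hb]]].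
have mem : forall a' p', (a', p') \in Lam -> a' \in [set x; y; z] /\ p' \in [set u; v; w].
  move=> a' p'; rewrite eL => /in3P [] [-> ->]; split.
  exact: in3a. exact: in3a. exact: in3b. exact: in3b. exact: in3c. exact: in3c.
have cl : forall a' p', a' \in [set x; y; z] -> p' \in [set u; v; w] -> col' (f a') p'.
  move=> a' p' h1 h2; rewrite ep in h2.
  by apply: (@perpS_col _ _ HG' _ _ _ h2); apply: imset_f.
case: (mem _ _ ha) => ha1 ha2; case: (mem _ _ hb) => hb1 hb2.
split; [| exact: cl | exact: cl | exact: cl | exact: cl].
case: dis => [[hxy hyz hxz]].
have hyx : y != x by rewrite eq_sym.
have hzy : z != y by rewrite eq_sym.
have hzx : z != x by rewrite eq_sym.
have hvu : v != u by rewrite eq_sym.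
have hwv : w != v by rewrite eq_sym.
have hwu : w != u by rewrite eq_sym.
move: hne; rewrite eL in ha hb.
move: ha hb => /in3P [] [-> ->] /in3P [] [-> ->]; rewrite ?eqxx // => _ /=.
all: by rewrite ?hxy ?hyz ?hxz ?hyx ?hzy ?hzx ?huv ?hvw ?huw ?hvu ?hwv ?hwu.
Qed.

Lemma adjL a b l' p q : l' \in L' -> f a \in l' -> f b \in l' -> a != b ->
  p \in l' -> q \in l' -> p != q -> adjS L L' f (a, p) (b, q).
Proof.
move=> hl ha hb hab hp hq hpq.
have fab : f a != f b by rewrite (inj_eq finj).
case: (third HG' hl ha hb fab) => c' [hc hca hcb el].
case: (third HG' hl hp hq hpq) => r [hr hrp hrq el2].
split; first by rewrite xpair_eqE negb_and hab.
exists [set (a, p); (b, q); (g c', r)]; split; last by split; [exact: in3a | exact: in3b].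
exists a, b, (g c'), p, q, r; split => //.
- split.
    by split; rewrite /ptS /= (perpE HG') ?gK; apply: (colI hl).
  split => //.
    by apply/eqP => e; move: hcb; rewrite e gK eqxx.
  by apply/eqP => e; move: hca; rewrite e gK eqxx.
- by left; rewrite -Hl imset3 gK -el.
- by split => //; rewrite eq_sym.
by rewrite imset3 gK -el (perpS_line HG' hl) el2.
Qed.

Lemma adjT a b p q : ~~ col' (f a) (f b) -> col' (f a) p -> col' (f b) p ->
  col' (f a) q -> col' (f b) q -> p != q -> adjS L L' f (a, p) (b, q).
Proof.
move=> nab hap hbp haq hbq hpq.
case: (triple HG' nab hap hbp haq hbq hpq) => C [r [nAC nBC hAC hBC [hrp hrq ep]]].
have hab : a != b by apply/eqP => e; move: nab; rewrite e (col_refl HG').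
have hac : a != g C by apply/eqP => e; move: hAC; rewrite e gK eqxx.
have hbc : b != g C by apply/eqP => e; move: hBC; rewrite e gK eqxx.
have eT : f @: [set a; b; g C] = [set f a; f b; C] by rewrite imset3 gK.
have hr : r \in perpS L' [set f a; f b; C] by rewrite ep; exact: in3c.
rewrite (perpS3 HG') in hr; case/and3P: hr => _ _ hCr.
split; first by rewrite xpair_eqE negb_and hab.
exists [set (a, p); (b, q); (g C, r)]; split; last by split; [exact: in3a | exact: in3b].
exists a, b, (g C), p, q, r; split => //.
- by split; split; rewrite /ptS /= ?(perpE HG') ?gK.
- right; split.
    split; first by rewrite cards3d.
    move=> x y /in3P [] -> /in3P [] ->; rewrite ?eqxx // => _; rewrite -col_f ?gK //;
      by rewrite col_sym.
  by rewrite -(card_imset _ finj) perpS_f eT ep cards3d // eq_sym.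
- by split => //; rewrite eq_sym.
by rewrite eT ep.
Qed.

Lemma walk3 a b c d : adjS L L' f a b -> adjS L L' f b c -> adjS L L' f c d ->
  walkS L L' f a d 3.
Proof.
move=> h1 h2 h3.
exists (fun i => match i with 0 => a | 1 => b | 2 => c | _ => d end); split => //.
by case=> [|[|[|i]]].
Qed.

Lemma case1 x y u v : col' (f x) u -> col' (f y) v -> x != y -> u != v ->
  col' (f y) u -> ~~ col' (f x) v -> distS L L' f (x, u) (y, v) 3.
Proof.
move=> hxu hyv hxy huv hyu nxv.
have fxy : f x != f y by rewrite (inj_eq finj).
have csym := col_sym L'.
split.
  have hvy : col' v (f y) by rewrite csym.
  case: (boolP (col' (f x) (f y))) => cxy.
    case: (eqVneq u (f y)) => [euy | nuy].
      subst u.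
      have nvy : v != f y by rewrite eq_sym.
      have hxy' : col' (f y) (f x) by rewrite csym.
      case: (ex_other HG' nxv cxy hvy cxy hvy) => w1 [hxw1 hvw1 hw1y _].
      have nyw : ~~ col' (f y) w1.
        apply: (nc HG' nxv hxy' hyv) => //; first by rewrite csym.
          by rewrite csym.
        by rewrite eq_sym.
      have hw1y' : col' w1 (f x) by rewrite csym.
      have hw1v : col' w1 v by rewrite csym.
      case: (ex_other HG' nyw hxy' hw1y' hyv hw1v) => z [hyz hw1z hzx hzv].
      have hzy : col' z (f y) by rewrite csym.
      have hzw1 : col' z w1 by rewrite csym.
      have nxz : ~~ col' (f x) z.
        apply: (nc HG' nyw cxy hxw1 hzy hzw1); by rewrite eq_sym.
      have nzv : ~~ col' z v.
        by apply: (nc HG' nyw hzy hzw1 hvy hvw1).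
      case: (colE hyv) => l2 [hl2 hy2 hv2].
      apply: (walk3 (b := (g z, w1)) (c := (g v, f y))).
      - apply: adjT; rewrite ?gK //; by rewrite eq_sym.
      - by apply: adjT; rewrite ?gK // csym.
      - apply: (adjL hl2); rewrite ?gK //.
        by apply/eqP => e; move: nvy; rewrite -e gK eqxx.
    have nvy : v != f y by apply/eqP => e; move: nxv; rewrite e cxy.
    case: (colE cxy) => l1 [hl1 hx1 hy1].
    have hu1 : u \in l1 by apply: (online HG' hl1 hx1 hy1 fxy); rewrite csym.
    case: (colE hyv) => l2 [hl2 hy2 hv2].
    have nyv : f y != v by rewrite eq_sym.
    case: (third HG' hl2 hy2 hv2 nyv) => t [ht2 hty htv _].
    have ygv : y != g v by apply/eqP => e; move: nvy; rewrite e gK eqxx.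
    apply: (walk3 (b := (y, f y)) (c := (g v, t))).
    - exact: (adjL hl1).
    - by apply: (adjL hl2); rewrite ?gK // eq_sym.
    - by apply: (adjL hl2); rewrite ?gK // eq_sym.
  have nux : u != f x by apply/eqP => e; move: cxy; rewrite -e csym hyu.
  have nuy : u != f y by apply/eqP => e; move: cxy; rewrite -e hxu.
  case: (boolP (col' u v)) => cuv.
    case: (colE hxu) => l1 [hl1 hx1 hu1].
    have nxu' : f x != u by rewrite eq_sym.
    case: (third HG' hl1 hx1 hu1 nxu') => t [ht1 htx htu _].
    case: (colE hyu) => l3 [hl3 hy3 hu3].
    have hv3 : v \in l3.
      have nyu' : f y != u by rewrite eq_sym.
      by apply: (online HG' hl3 hy3 hu3 nyu'); rewrite csym.
    apply: (walk3 (b := (g t, f x)) (c := (g u, u))).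
    - apply: (adjL hl1); rewrite ?gK //.
      by apply/eqP => e; move: htx; rewrite e gK eqxx.
    - apply: (adjL hl1); rewrite ?gK //.
      by rewrite (inj_eq (can_inj gK)).
    - apply: (adjL hl3); rewrite ?gK //.
      by apply/eqP => e; move: nuy; rewrite -e gK eqxx.
  have nvy : v != f y by apply/eqP => e; move: cuv; rewrite e csym hyu.
  case: (colE hyv) => l2 [hl2 hy2 hv2].
  have hx2 : f x \notin l2 by apply/negP => h; move: nxv; rewrite (colI hl2 h hv2).
  case: (gqE HG' hl2 hx2) => w1 hw12 hxw1.
  have ygv : y != g v by apply/eqP => e; move: nvy; rewrite e gK eqxx.
  apply: (walk3 (b := (y, w1)) (c := (g v, f y))).
  - apply: adjT => //; first by apply: (colI hl2).
    by apply/eqP => e; move: cuv; rewrite e (colI hl2 hw12 hv2).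
  - apply: (adjL hl2); rewrite ?gK //.
    by apply/eqP => e; move: cxy; rewrite -e hxw1.
  - by apply: (adjL hl2); rewrite ?gK // eq_sym.
move=> m hm [h [h0 hm' H]].
case: m hm hm' H => [|[|[|m]]] // _.
- by move=> e; move: h0; rewrite e => [[e1 _]]; move: hxy; rewrite e1 eqxx.
- move=> e /(_ 0 isT); rewrite h0 e => /adj_nec [_ hxv _ _ _].
  by move: nxv; rewrite hxv.
move=> e H.
move: (H 0 isT) (H 1 isT); rewrite h0 e.
case: (h 1) => z w /adj_nec [/andP [hxz huw] hxw hzu _ hzw] /adj_nec [/andP [hzy hwv] hzv hyw _ _].
apply: (no2 HG' fxy _ _ hxu hyu hzu hxw hyw hzw huw hyv hzv nxv).
  by rewrite (inj_eq finj) eq_sym.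
by rewrite (inj_eq finj).
Qed.
End C.

Theorem lemma3p3 (P P' : finType) (L : {set {set P}}) (L' : {set {set P'}})
  (f : P -> P') :
  is_GQ22 L -> is_GQ22 L' -> isom L L' f ->
  forall (x y : P) (u v : P'),
    ptS L' f (x, u) -> ptS L' f (y, v) ->
    x != y -> u != v ->
    (u \in perp L' (f y) /\ v \notin perp L' (f x)) \/
    (u \notin perp L' (f y) /\ v \in perp L' (f x)) ->
    distS L L' f (x, u) (y, v) 3.
Proof.
move=> HG HG' [[g fK gK] Hl] x y u v; rewrite /ptS /= !(perpE HG') => hxu hyv hxy huv.
case=> [[hyu nxv] | [nyu hxv]].
  exact: (case1 HG HG' fK gK Hl hxu hyv hxy huv hyu nxv).
apply: dist_rev.
by apply: (case1 HG HG' fK gK Hl hyv hxu _ _ hxv nyu); rewrite eq_sym.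
Qed.
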